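(* Consider the optimization problem (P) defined in the context. Every optimal solution $(\boldsymbol\tau,\boldsymbol\varphi,\mathbf e)$ of (P) satisfies $\sum_{k=0}^{K}\tau_k=T$.
   Context: Parameters: integer $K\ge1$, $T>0$, $W>0$, $\zeta\in(0,1]$, $P_t>0$, $I_p>0$, and for $k=1,\dots,K$: $h_k>0$, $f_k>0$, $\gamma_k>0$, $B_k^b>0$. Variables: $\boldsymbol\tau=(\tau_0,\tau_1,\dots,\tau_K)$, $\boldsymbol\varphi=(\varphi_1,\dots,\varphi_K)$, $\mathbf e=(e_1,\dots,e_K)$. Rate of node $k$: $R_k(\tau_k,\varphi_k,e_k)=\varphi_k W\log_2(1+\frac{e_k}{\varphi_k}\gamma_k)+(\tau_k-\varphi_k)B_k^b$ if $\varphi_k>0$, and $R_k=\tau_kB_k^b$ if $\varphi_k=0$. Problem (P): maximize $R(\boldsymbol\tau,\boldsymbol\varphi,\mathbf e)=\min_{1\le k\le K}R_k(\tau_k,\varphi_k,e_k)$ subject to: $\sum_{k=0}^K\tau_k\le T$; $0\le\tau_0$; $0\le\varphi_k\le\tau_k\le T$ for $k=1,\dots,K$; $0\le e_k\le \zeta P_t h_k\sum_{i=0}^{k-1}\tau_i$ for $k=1,\dots,K$ (harvested-energy constraint); $e_k\le \frac{I_p}{f_k}\varphi_k$ for $k=1,\dots,K$ (interference constraint). *)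

(* Defs.v *)
From Stdlib Require Import Reals Lra List.
Import ListNotations.
Open Scope R_scope.

Definition log2 (x : R) : R := ln x / ln 2.

Definition rate (W gam Bb tauk phik ek : R) : R :=
  if Rlt_dec 0 phik
  then phik * W * log2 (1 + ek / phik * gam) + (tauk - phik) * Bb
  else tauk * Bb.

(* Objective: min over k = 1..K of R_k.  (The extra R_1 seed does not change the min.) *)
Definition objective (K : nat) (W : R) (gamma Bb : nat -> R)
  (tau phi e : nat -> R) : R :=
  fold_right Rmin (rate W (gamma 1%nat) (Bb 1%nat) (tau 1%nat) (phi 1%nat) (e 1%nat))
    (map (fun k => rate W (gamma k) (Bb k) (tau k) (phi k) (e k)) (seq 1 K)).

(* Feasible set of problem (P).  tau is indexed 0..K, phi and e 1..K.
   sum_f_R0 tau n = tau 0 + ... + tau n. *)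
Definition feasible (K : nat) (T zeta Pt Ip : R) (h f : nat -> R)
  (tau phi e : nat -> R) : Prop :=
  sum_f_R0 tau K <= T /\
  0 <= tau 0%nat /\
  (forall k : nat, (1 <= k <= K)%nat ->
     0 <= phi k /\ phi k <= tau k /\ tau k <= T /\
     0 <= e k /\
     e k <= zeta * Pt * h k * sum_f_R0 tau (k - 1) /\
     e k <= Ip / f k * phi k).

Definition optimal (K : nat) (T W zeta Pt Ip : R) (h f gamma Bb : nat -> R)
  (tau phi e : nat -> R) : Prop :=
  feasible K T zeta Pt Ip h f tau phi e /\
  forall tau' phi' e' : nat -> R,
    feasible K T zeta Pt Ip h f tau' phi' e' ->
    objective K W gamma Bb tau' phi' e' <= objective K W gamma Bb tau phi e.

(* Main.v *)
Require Import Defs.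
From Stdlib Require Import Reals Lra Lia List.
Open Scope R_scope.

Lemma Rmin_lt2 x y x' y' : x < x' -> y < y' -> Rmin x y < Rmin x' y'.
Proof. intros. unfold Rmin; destruct (Rle_dec x y); destruct (Rle_dec x' y'); lra. Qed.

Lemma fold_lt (g g' : nat -> R) a b l : a < b -> (forall x, In x l -> g x < g' x) ->
  fold_right Rmin a (map g l) < fold_right Rmin b (map g' l).
Proof.
  intros Hab H; induction l as [|x l IH]; simpl; auto.
  apply Rmin_lt2. apply H; simpl; auto. apply IH; intros; apply H; simpl; auto.
Qed.

Lemma rate_shift W g Bb t p e d : rate W g Bb (t + d) p e = rate W g Bb t p e + d * Bb.
Proof. unfold rate; destruct (Rlt_dec 0 p); ring. Qed.

Lemma sum_shift (tau : nat -> R) d n :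
  sum_f_R0 (fun k => match k with O => tau O | _ => tau k + d end) n = sum_f_R0 tau n + INR n * d.
Proof.
  induction n; simpl. ring. rewrite IHn. destruct n; simpl; ring.
Qed.


Lemma sum_nonneg (f : nat -> R) n : (forall i, (i <= n)%nat -> 0 <= f i) -> 0 <= sum_f_R0 f n.
Proof.
  induction n; intros H; simpl. apply H; lia.
  assert (0 <= sum_f_R0 f n) by (apply IHn; intros; apply H; lia).
  assert (0 <= f (S n)) by (apply H; lia). lra.
Qed.


Lemma le_sum (f : nat -> R) n : (forall i, (i <= n)%nat -> 0 <= f i) ->
  forall k, (k <= n)%nat -> f k <= sum_f_R0 f n.
Proof.
  induction n; intros H k Hk; simpl.
  - replace k with O by lia. lra.
  - destruct (Nat.eq_dec k (S n)).
    + subst. assert (0 <= sum_f_R0 f n) by (apply sum_nonneg; intros; apply H; lia). lra.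
    + assert (f k <= sum_f_R0 f n) by (apply IHn; [intros; apply H; lia | lia]).
      assert (0 <= f (S n)) by (apply H; lia). lra.
Qed.

Theorem proposition1 (K : nat) (T W zeta Pt Ip : R) (h f gamma Bb : nat -> R)
  (HK : (1 <= K)%nat) (HT : 0 < T) (HW : 0 < W)
  (Hzeta : 0 < zeta <= 1) (HPt : 0 < Pt) (HIp : 0 < Ip)
  (Hh : forall k, (1 <= k <= K)%nat -> 0 < h k)
  (Hf : forall k, (1 <= k <= K)%nat -> 0 < f k)
  (Hgamma : forall k, (1 <= k <= K)%nat -> 0 < gamma k)
  (HBb : forall k, (1 <= k <= K)%nat -> 0 < Bb k)
  (tau phi e : nat -> R) :
  optimal K T W zeta Pt Ip h f gamma Bb tau phi e ->
  sum_f_R0 tau K = T.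
Proof.
  intros [[Hs [H0 Hk]] Hopt].
  destruct (Rle_lt_or_eq_dec _ _ Hs) as [Hlt|]; [|assumption].
  exfalso.
  assert (HKr : 1 <= INR K) by (apply (le_INR 1); lia).
  set (d := (T - sum_f_R0 tau K) / INR K).
  assert (Hd : 0 < d) by (unfold d; apply Rdiv_lt_0_compat; lra).
  assert (HdK : INR K * d = T - sum_f_R0 tau K) by (unfold d; field; lra).
  set (tau' := fun k => match k with O => tau O | _ => tau k + d end).
  assert (Hnn : forall i, (i <= K)%nat -> 0 <= tau i).
  { intros [|i] Hi. exact H0. destruct (Hk (S i)) as [? [? _]]; [lia|lra]. }
  assert (Hf' : feasible K T zeta Pt Ip h f tau' phi e).
  { split; [|split].
    - unfold tau'; rewrite sum_shift; lra.
    - simpl; exact H0.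
    - intros k Hk1. destruct (Hk k Hk1) as [A [B [C [D [E F]]]]].
      assert (Htk : tau' k = tau k + d) by (destruct k; [lia|reflexivity]).
      rewrite Htk. repeat split; try lra.
      + assert (tau k <= sum_f_R0 tau K) by (apply le_sum; [exact Hnn|lia]).
        assert (d <= INR K * d) by nra. lra.
      + unfold tau'; rewrite sum_shift.
        assert (0 <= INR (k-1) * d) by (apply Rmult_le_pos; [apply pos_INR|lra]).
        assert (0 < h k) by (apply Hh; exact Hk1).
        assert (0 <= zeta * Pt * h k) by (apply Rmult_le_pos; [apply Rmult_le_pos|]; lra).
        apply Rle_trans with (1 := E). apply Rmult_le_compat_l; lra. }
  specialize (Hopt _ _ _ Hf').
  assert (objective K W gamma Bb tau phi e < objective K W gamma Bb tau' phi e).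
  { unfold objective. apply fold_lt.
    - change (tau' 1%nat) with (tau 1%nat + d). rewrite rate_shift.
      assert (0 < Bb 1%nat) by (apply HBb; lia). nra.
    - intros x Hx. apply in_seq in Hx.
      assert (Htk : tau' x = tau x + d) by (destruct x; [lia|reflexivity]).
      rewrite Htk, rate_shift. assert (0 < Bb x) by (apply HBb; lia). nra. }
  lra.
Qed.
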